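(* Let $\mathbf{x}$ be an input, $\bar{\mathcal{V}}$ a finite token set, $p_\theta(\cdot\mid\mathbf{x})$ a score on hypotheses, and $k\ge 1$. Run one iteration $t$ of Lookbehind Heuristic Beam Search on a set $Y_{t-1}$ of $k$ hypotheses, producing $\mathbf{y}_t^1,\dots,\mathbf{y}_t^k$. Then for every $i\in\{1,\dots,k\}$, writing $\mathbf{y}_t^i=\mathbf{y}'\circ y$ with $\mathbf{y}'\in Y_{t-1}$ and $y\in\bar{\mathcal{V}}$: (1) the parent $\mathbf{y}'$ is among the top-$i$ scoring hypotheses of $Y_{t-1}$, i.e. $\mathbf{y}'=\mathbf{y}_{t-1}^j$ for some $j\le i$, where $\mathbf{y}_{t-1}^1,\dots,\mathbf{y}_{t-1}^k$ is $Y_{t-1}$ sorted in descending order of $p_\theta(\cdot\mid\mathbf{x})$; (2) $\mathbf{y}_t^i$ has one of the top-$i$ highest scores among all children of the top-$i$ parents, i.e. among $C_i=\{\mathbf{y}_{t-1}^j\circ y : j\le i,\ y\in\bar{\mathcal{V}}\}$ at most $i-1$ elements have score $\log p_\theta(\cdot\mid\mathbf{x})$ strictly greater than that of $\mathbf{y}_t^i$.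
   Context: One iteration of Lookbehind Heuristic Beam Search (LHBS), given $Y_{t-1}$: sort $Y_{t-1}$ as $\mathbf{y}_{t-1}^1,\dots,\mathbf{y}_{t-1}^k$ in descending order of $p_\theta(\mathbf{y}_{t-1}^i\mid\mathbf{x})$; set $\mathcal{B}'_{t,0}=\emptyset$; for $i=1,\dots,k$: set $\mathcal{B}_{t,i}=\mathcal{B}'_{t,i-1}\cup\{\mathbf{y}_{t-1}^i\circ y: y\in\bar{\mathcal{V}}\}$, $\mathbf{y}_t^i=\arg\max_{\mathbf{y}\in\mathcal{B}_{t,i}}\log p_\theta(\mathbf{y}\mid\mathbf{x})$, and $\mathcal{B}'_{t,i}=\mathcal{B}_{t,i}\setminus\{\mathbf{y}_t^i\}$; return $Y_t=\{\mathbf{y}_t^1,\dots,\mathbf{y}_t^k\}$. Here $\circ$ denotes concatenation. *)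

(* Defs.v *)
From HB Require Import structures.
From mathcomp Require Import all_boot all_order all_algebra.
From mathcomp Require Import all_classical all_reals all_analysis.
Set Implicit Arguments. Unset Strict Implicit. Unset Printing Implicit Defensive.
Import Order.TTheory GRing.Theory Num.Theory.
Local Open Scope ring_scope.

(* Hypotheses are token sequences [seq V]; concatenation y' o y of a
   hypothesis with a token is [rcons y' y]. *)

Definition children (V : finType) (y' : seq V) : seq (seq V) :=
  [seq rcons y' v | v <- enum V].

(* LHBS bookkeeping, 0-indexed.  [ys] is Y_{t-1} sorted (ys`_0 = y^1_{t-1}),
   [zs] the outputs (zs`_n = y^{n+1}_t).
   Bp ys zs n = B'_{t,n};  B ys zs n = B_{t,n+1}. *)
Fixpoint LHBS_Bp (V : finType) (ys zs : seq (seq V)) (n : nat) : seq (seq V) :=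
  match n with
  | 0 => [::]
  | m.+1 => [seq w <- LHBS_Bp ys zs m ++ children (nth [::] ys m)
             | w != nth [::] zs m]
  end.

Definition LHBS_B (V : finType) (ys zs : seq (seq V)) (n : nat) : seq (seq V) :=
  LHBS_Bp ys zs n ++ children (nth [::] ys n).

(* [zs] is a possible output of one LHBS iteration run on the sorted list
   [ys], with score p (i.e. p_theta(. | x)): at step n, zs`_n is an argmax of
   ln p over B_{t,n+1} (any tie-breaking). *)
Definition LHBS_iteration (R : realType) (V : finType) (p : seq V -> R)
    (ys zs : seq (seq V)) : Prop :=
  size zs = size ys /\
  forall n, (n < size ys)%N ->
    nth [::] zs n \in LHBS_B ys zs n /\
    forall w, w \in LHBS_B ys zs n -> ln (p w) <= ln (p (nth [::] zs n)).

(* C_{i+1} (0-indexed i): children of the top-(i+1) parents. *)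
Definition top_children (V : finType) (ys : seq (seq V)) (i : nat) : seq (seq V) :=
  [seq rcons (nth [::] ys j) v | j <- iota 0 i.+1, v <- enum V].

(* Main.v *)
Require Import Defs.
From HB Require Import structures.
From mathcomp Require Import all_boot all_order all_algebra.
From mathcomp Require Import all_classical all_reals all_analysis.
From mathcomp Require Import zify.
Import Order.TTheory GRing.Theory Num.Theory.
Local Open Scope ring_scope.

Section H.
Variable V : finType.
Variables ys zs : seq (seq V).

Lemma mem_children (y : seq V) w : w \in children y -> exists v, w = rcons y v.
Proof. by move/mapP=> [v _ ->]; exists v. Qed.

Lemma children_mem (y : seq V) v : rcons y v \in children y.
Proof. by apply/mapP; exists v; rewrite ?mem_enum. Qed.

Lemma Bstep n w : w \in LHBS_B ys zs n -> w != nth [::] zs n ->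
  w \in LHBS_B ys zs n.+1.
Proof.
move=> H Hne; rewrite /LHBS_B mem_cat; apply/orP; left.
by rewrite /= mem_filter Hne; exact H.
Qed.

Lemma Bmulti j d w : w \in LHBS_B ys zs j ->
  (forall m, (j <= m < j + d)%N -> w != nth [::] zs m) ->
  w \in LHBS_B ys zs (j + d).
Proof.
move=> Hw; elim: d => [|d IH] H; first by rewrite addn0.
rewrite addnS; apply: Bstep.
  apply: IH => m /andP[h1 h2]; apply: H; rewrite h1 /=; lia.
apply: H; apply/andP; split; lia.
Qed.

Lemma Bp_parent n w : w \in LHBS_Bp ys zs n ->
  exists2 j, (j < n)%N & exists v, w = rcons (nth [::] ys j) v.
Proof.
elim: n w => [|n IH] w //=.
rewrite mem_filter => /andP[_]; rewrite mem_cat => /orP[/IH [j hj hv]|/mem_children hv].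
  by exists j => //; lia.
by exists n.
Qed.

Lemma B_parent n w : w \in LHBS_B ys zs n ->
  exists2 j, (j <= n)%N & exists v, w = rcons (nth [::] ys j) v.
Proof.
rewrite mem_cat => /orP[/Bp_parent [j hj hv]|/mem_children hv].
  by exists j => //; lia.
by exists n.
Qed.
End H.

Theorem proposition2 (R : realType) (X : Type) (x : X) (V : finType)
    (p : X -> seq V -> R) (k : nat) (ys zs : seq (seq V)) :
  (forall w, 0 < p x w) ->
  (1 <= k)%N ->
  size ys = k ->
  uniq ys ->
  sorted (fun a b => p x b <= p x a) ys ->
  LHBS_iteration (p x) ys zs ->
  forall i, (i < k)%N ->
    (exists y' v, y' \in ys /\ nth [::] zs i = rcons y' v) /\
    (forall y' v, y' \in ys -> nth [::] zs i = rcons y' v ->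
       exists2 j, (j <= i)%N & y' = nth [::] ys j) /\
    (size (undup [seq w <- top_children ys i
                 | (ln (p x (nth [::] zs i)) < ln (p x w))%R]) <= i)%N.
Proof.
move=> _ _ Hk _ _ [Hsz Hit] i Hi.
have [Hin Hmax] := Hit i (ltac:(lia)).
have [j hj [v hv]] := @B_parent V ys zs i _ Hin.
split.
  exists (nth [::] ys j), v; split => //; apply: mem_nth; rewrite Hk; exact: leq_ltn_trans hj Hi.
split.
  move=> y' v' _ E; exists j => //.
  by move: E; rewrite hv => /rcons_inj [].
apply: (@leq_trans (size (take i zs))); last by rewrite size_take; case: ltnP.
apply: uniq_leq_size; first exact: undup_uniq.
move=> w; rewrite mem_undup mem_filter => /andP[Hlt Hw].
case/allpairsP: Hw => [[j' v'] [/= hj' _ Ew]]; subst w.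
  have {}hj' : (j' < i.+1)%N by move: hj'; rewrite inE mem_iota; case/orP=> [/eqP->|]; lia.
apply/negPn/negP => Hn.
have Hb : rcons (nth [::] ys j') v' \in LHBS_B ys zs (j' + (i - j')).
  apply: Bmulti; first by rewrite mem_cat children_mem orbT.
  move=> m /andP[h1 h2]; apply/negP => /eqP E; move/negP: Hn; apply.
  rewrite E -(nth_take _ (_ : (m < i)%N)); last lia.
  have hm : (m < i)%N by move: h2; rewrite subnKC // -ltnS.
  apply: mem_nth; rewrite size_take_min leq_min hm /= Hsz Hk; exact: ltn_trans hm Hi.
have E : (j' + (i - j') = i)%N by lia.
rewrite E in Hb.
by have := lt_le_trans Hlt (Hmax _ Hb); rewrite ltxx.
Qed.
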